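(* Fix $\alpha>0$, $\gamma>0$, $\Sigma_\epsilon>0$, $\omega_1\in[0,1)$, $\omega_2\in[0,1]$. Let $$T(x)=\left(\frac{\omega_2}{x^2}+\frac{(1-\omega_2)\alpha^2\gamma^2\Sigma_\epsilon}{(1+\gamma-x)^2}\right)^{-1/2},\qquad f_y(x)=\left(\frac{\omega_1}{x^2}+\frac{(1-\omega_1)\gamma^2\alpha^2\Sigma_\epsilon}{(1+\gamma-y)^2}\right)^{-1/2},$$ and $A(\lambda)=\frac{\gamma^2\alpha^2\Sigma_\epsilon}{(1+\gamma-\lambda)^2}$. Let $J\subset[1,1+\gamma)$ be a compact $T$-invariant interval, let $\hat I$ be the set of bi-infinite sequences $\pmb\lambda=(\lambda_{2,i})_{i\in\mathbb Z}$ in $J$ with $T(\lambda_{2,i})=\lambda_{2,i+1}$ for all $i$, and let $\hat T:\hat I\to\hat I$ be the shift $\hat T((\lambda_{2,i})_i)=(\lambda_{2,i+1})_i$. Then the random fixed point of the forced bank, i.e. the function $x:\hat I\to(0,\infty)$ satisfying $f_{\lambda_{2,0}}(x(\pmb\lambda))=x(\hat T(\pmb\lambda))$ for all $\pmb\lambda\in\hat I$, is given by $$x(\pmb\lambda)=\frac{1}{\sqrt{(1-\omega_1)\sum_{i=0}^{\infty}A(\lambda_{2,-1-i})\,\omega_1^{\,i}}}$$ (with $\omega_1^0=1$); in particular this series converges, $x$ is positive and satisfies the stated relation.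
   Context: This is the case $\pi_1=0$ of the two-bank leverage model: the large bank's leverage evolves by $\lambda_{2,t+1}=T(\lambda_{2,t})$ and the small bank's by $\lambda_{1,t+1}=f_{\lambda_{2,t}}(\lambda_{1,t})$; $\hat T$ is the invertible (natural) extension of $T$. *)

(* Defs.v *)
From Stdlib Require Import Reals ZArith Lra.
From Coquelicot Require Import Coquelicot.
Open Scope R_scope.

Definition Afun (alpha gamma Se l : R) : R :=
  gamma ^ 2 * alpha ^ 2 * Se / (1 + gamma - l) ^ 2.

Definition Tmap (alpha gamma Se w2 x : R) : R :=
  / sqrt (w2 / x ^ 2 + (1 - w2) * alpha ^ 2 * gamma ^ 2 * Se / (1 + gamma - x) ^ 2).

Definition fmap (alpha gamma Se w1 y x : R) : R :=
  / sqrt (w1 / x ^ 2 + (1 - w1) * gamma ^ 2 * alpha ^ 2 * Se / (1 + gamma - y) ^ 2).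

Definition inIhat (alpha gamma Se w2 a b : R) (lam : Z -> R) : Prop :=
  forall i : Z, a <= lam i <= b /\ Tmap alpha gamma Se w2 (lam i) = lam (i + 1)%Z.

Definition Tshift (lam : Z -> R) : Z -> R := fun i => lam (i + 1)%Z.

Definition xterm (alpha gamma Se w1 : R) (lam : Z -> R) (i : nat) : R :=
  Afun alpha gamma Se (lam (- 1 - Z.of_nat i)%Z) * w1 ^ i.

Definition xfix (alpha gamma Se w1 : R) (lam : Z -> R) : R :=
  1 / sqrt ((1 - w1) * Series (xterm alpha gamma Se w1 lam)).

(* Main.v *)
Require Import Defs.
From Stdlib Require Import Reals ZArith Lra Lia.
From Coquelicot Require Import Coquelicot.
Open Scope R_scope.

Lemma A_bounds (alpha gamma Se b l : R) :
  0 < alpha -> 0 < gamma -> 0 < Se -> b < 1 + gamma -> l <= b ->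
  0 < Afun alpha gamma Se l /\
  Afun alpha gamma Se l <= gamma ^ 2 * alpha ^ 2 * Se / (1 + gamma - b) ^ 2.
Proof.
  intros ha hg hs hb hl. unfold Afun.
  assert (hK : 0 < gamma ^ 2 * alpha ^ 2 * Se)
    by (apply Rmult_lt_0_compat; [apply Rmult_lt_0_compat|]; auto; apply pow_lt; auto).
  assert (h0 : 0 < 1 + gamma - b) by lra.
  split.
  - apply Rdiv_lt_0_compat; auto. apply pow_lt; lra.
  - unfold Rdiv. apply Rmult_le_compat_l; [lra|].
    apply Rinv_le_contravar. apply pow_lt; lra.
    apply pow_incr. lra.
Qed.

Lemma S_props (alpha gamma Se w1 a b : R) (lam : Z -> R) :
  0 < alpha -> 0 < gamma -> 0 < Se -> 0 <= w1 < 1 -> b < 1 + gamma ->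
  (forall i, a <= lam i <= b) ->
  ex_series (xterm alpha gamma Se w1 lam) /\ 0 < Series (xterm alpha gamma Se w1 lam).
Proof.
  intros ha hg hs hw hb hl.
  pose (Mb := gamma ^ 2 * alpha ^ 2 * Se / (1 + gamma - b) ^ 2).
  assert (hA : forall n, 0 < Afun alpha gamma Se (lam (- 1 - Z.of_nat n)%Z) <= Mb).
  { intro n. destruct (hl (- 1 - Z.of_nat n)%Z).
    destruct (A_bounds alpha gamma Se b (lam (- 1 - Z.of_nat n)%Z)); auto; lra. }
  assert (hpos : forall n, 0 <= xterm alpha gamma Se w1 lam n).
  { intro n. unfold xterm. apply Rmult_le_pos. destruct (hA n); lra. apply pow_le; lra. }
  assert (hex : ex_series (xterm alpha gamma Se w1 lam)).
  { apply (@ex_series_le R_AbsRing R_CompleteNormedModule _ (fun n => Mb * w1 ^ n)).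
    - intro n. rewrite <- (Rabs_pos_eq _ (hpos n)) at 1. change (norm (Rabs (xterm alpha gamma Se w1 lam n)))
        with (Rabs (Rabs (xterm alpha gamma Se w1 lam n))).
      rewrite Rabs_Rabsolu, Rabs_pos_eq by apply hpos.
      unfold xterm. apply Rmult_le_compat_r. apply pow_le; lra. destruct (hA n); lra.
    - apply (ex_series_scal_l Mb (fun n => w1 ^ n)). eexists. apply is_series_geom.
      rewrite Rabs_pos_eq; lra. }
  split; auto.
  rewrite Series_incr_1 by auto.
  assert (0 <= Series (fun k => xterm alpha gamma Se w1 lam (S k))).
  { assert (hz : Series (fun _ : nat => 0 * 0) = 0) by (rewrite (Series_scal_l 0 (fun _ => 0)); ring).
    rewrite <- hz. apply Series_le. intro n; rewrite Rmult_0_l; split; [lra| apply hpos].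
    apply (ex_series_incr_1 (xterm alpha gamma Se w1 lam)); auto. }
  assert (0 < xterm alpha gamma Se w1 lam 0). { destruct (hA 0%nat). unfold xterm. rewrite pow_O, Rmult_1_r. lra. }
  lra.
Qed.

Theorem mainTheorem5 (alpha gamma Se w1 w2 a b : R) :
  0 < alpha -> 0 < gamma -> 0 < Se ->
  0 <= w1 < 1 -> 0 <= w2 <= 1 ->
  1 <= a -> a <= b -> b < 1 + gamma ->
  (forall y, a <= y <= b -> a <= Tmap alpha gamma Se w2 y <= b) ->
  forall lam : Z -> R, inIhat alpha gamma Se w2 a b lam ->
    ex_series (xterm alpha gamma Se w1 lam) /\
    0 < xfix alpha gamma Se w1 lam /\
    fmap alpha gamma Se w1 (lam 0%Z) (xfix alpha gamma Se w1 lam)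
      = xfix alpha gamma Se w1 (Tshift lam).
Proof.
  intros ha hg hs hw hw2 h1a hab hb hT lam hI.
  assert (hl : forall i, a <= lam i <= b) by (intro i; apply hI).
  assert (hl' : forall i, a <= Tshift lam i <= b) by (intro i; apply hI).
  destruct (S_props alpha gamma Se w1 a b lam) as [hex hS]; auto.
  destruct (S_props alpha gamma Se w1 a b (Tshift lam)) as [hex' hS']; auto.
  remember (Series (xterm alpha gamma Se w1 lam)) as S0 eqn:HS0.
  assert (hrel : Series (xterm alpha gamma Se w1 (Tshift lam)) =
                 Afun alpha gamma Se (lam 0%Z) + w1 * S0).
  { rewrite Series_incr_1 by auto. rewrite HS0, <- Series_scal_l.
    f_equal.
    - unfold xterm, Tshift. simpl. rewrite Rmult_1_r. reflexivity.
    - apply Series_ext. intro n. unfold xterm, Tshift.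
      replace (- 1 - Z.of_nat (S n) + 1)%Z with (- 1 - Z.of_nat n)%Z by lia.
      simpl. ring. }
  assert (hp : 0 < (1 - w1) * S0) by (apply Rmult_lt_0_compat; lra).
  assert (hsq : 0 < sqrt ((1 - w1) * S0)) by (apply sqrt_lt_R0; auto).
  split; auto. split.
  - unfold xfix. rewrite <- HS0. apply Rdiv_lt_0_compat; lra.
  - unfold fmap, xfix. rewrite <- HS0. rewrite hrel.
    assert (hx : (1 / sqrt ((1 - w1) * S0)) ^ 2 = / ((1 - w1) * S0)).
    { rewrite <- Rsqr_pow2, Rsqr_div' , Rsqr_sqrt by lra. unfold Rsqr. field. lra. }
    assert (heq : w1 / (1 / sqrt ((1 - w1) * S0)) ^ 2 +
     (1 - w1) * gamma ^ 2 * alpha ^ 2 * Se / (1 + gamma - lam 0%Z) ^ 2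
     = (1 - w1) * (Afun alpha gamma Se (lam 0%Z) + w1 * S0)).
    { rewrite hx. unfold Afun. field.
      destruct (hl 0%Z). split; [lra|]. split; lra. }
    rewrite heq. unfold Rdiv. rewrite Rmult_1_l. reflexivity.
Qed.
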